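(* Let $\Bbbk$ be a field of characteristic $0$ and $X=\{x_1,x_2,\dots\}$. (1) If $g=g(x_1,\dots,x_n)\in\mathrm{SId}$, then $\Psi^{x_i}(g)\in\mathrm{DiSId}$ for all $i=1,\dots,n$. (2) If $f=f(x_1,\dots,x_n)\in\mathrm{DiSId}$ and $f=f_1+\dots+f_n$, where $f_i$ is the sum of the terms of $f$ whose dimonomials have central letter $x_i$, then there exists $j\in\{1,\dots,n\}$ such that $\bar f_j\in\mathrm{SId}$.
   Context: $\mathrm{Alg}\langle X\rangle$ is the free nonassociative algebra. A 0-dialgebra is a vector space with bilinear operations $\vdash,\dashv$ satisfying $(x\dashv y)\vdash z=(x\vdash y)\vdash z$, $x\dashv(y\vdash z)=x\dashv(y\dashv z)$; $\mathrm{DiAlg0}\langle X\rangle$ is the free 0-dialgebra. Central letter of a dimonomial: $c(a)=a$, $c(w_1\vdash w_2)=c(w_2)$, $c(w_1\dashv w_2)=c(w_1)$. For $f\in\mathrm{DiAlg0}\langle X\rangle$, $\bar f\in\mathrm{Alg}\langle X\rangle$ is its image under the map identifying $\vdash$ and $\dashv$ with the ordinary product. For a monomial $w$ of $\mathrm{Alg}\langle X\rangle$ containing $x_i$ exactly once, $\Psi^{x_i}(w)$ is obtained by replacing each product $uv$ by $u\dashv v$ if $x_i$ occurs in $u$ and $u\vdash v$ otherwise; extend linearly to multilinear polynomials. A Jordan algebra: commutative algebra with $J(x_1,\dots,x_4)=0$, $J=x_1(x_2(x_3x_4))+(x_2(x_1x_3))x_4+x_3(x_2(x_1x_4))-(x_1x_2)(x_3x_4)-(x_1x_3)(x_2x_4)-(x_3x_2)(x_1x_4)$;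 Jordan dialgebra: 0-dialgebra with $x_1\vdash x_2=x_2\dashv x_1$ and $\Psi^{x_i}(J)=0$, $i=1,\dots,4$. An associative dialgebra additionally satisfies $(x\vdash y)\vdash z=x\vdash(y\vdash z)$, $(x\dashv y)\dashv z=x\dashv(y\dashv z)$, $(x\vdash y)\dashv z=x\vdash(y\dashv z)$, and $D^{(+)}$ has $a\vdash_+b=\tfrac12(a\vdash b+b\dashv a)$, $a\dashv_+b=\tfrac12(a\dashv b+b\vdash a)$; a Jordan dialgebra is special if it embeds in such a $D^{(+)}$; a Jordan algebra is special if it embeds in $A^{(+)}$ ($a\circ b=\tfrac12(ab+ba)$) for an associative algebra $A$. $\mathrm{SId}$ is the set of multilinear $g\in\mathrm{Alg}\langle X\rangle$ that vanish identically on all special Jordan algebras but not on all Jordan algebras. $\mathrm{DiSId}$ is the set of multilinear $f\in\mathrm{DiAlg0}\langle X\rangle$ that vanish identically on all special Jordan dialgebras but not on all Jordan dialgebras. *)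

(* Defs.v *)
From HB Require Import structures.
From mathcomp Require Import all_boot all_order all_algebra.
From mathcomp Require Import freeg.
Set Implicit Arguments. Unset Strict Implicit. Unset Printing Implicit Defensive.
Import Order.TTheory GRing.Theory Num.Theory.
Local Open Scope ring_scope.

Inductive nmono : Type := NVar of nat | NMul of nmono & nmono.

Fixpoint nm_code (m : nmono) : GenTree.tree nat :=
  match m with
  | NVar i => GenTree.Leaf i
  | NMul u v => GenTree.Node 0 [:: nm_code u; nm_code v]
  end.
Fixpoint nm_decode (t : GenTree.tree nat) : option nmono :=
  match t with
  | GenTree.Leaf i => Some (NVar i)
  | GenTree.Node 0 [:: a; b] =>
      match nm_decode a, nm_decode b with
      | Some u, Some v => Some (NMul u v) | _, _ => None end
  | _ => None
  end.
Lemma nm_codeK : pcancel nm_code nm_decode.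
Proof. by elim=> //= u -> v ->. Qed.
HB.instance Definition _ := Countable.copy nmono (pcan_type nm_codeK).

(* Dimonomials: DL u v = u |- v, DR u v = u -| v. *)
Inductive dmono : Type :=
  DVar of nat | DL of dmono & dmono | DR of dmono & dmono.

Fixpoint dm_code (m : dmono) : GenTree.tree nat :=
  match m with
  | DVar i => GenTree.Leaf i
  | DL u v => GenTree.Node 0 [:: dm_code u; dm_code v]
  | DR u v => GenTree.Node 1 [:: dm_code u; dm_code v]
  end.
Fixpoint dm_decode (t : GenTree.tree nat) : option dmono :=
  match t with
  | GenTree.Leaf i => Some (DVar i)
  | GenTree.Node 0 [:: a; b] =>
      match dm_decode a, dm_decode b with
      | Some u, Some v => Some (DL u v) | _, _ => None end
  | GenTree.Node 1 [:: a; b] =>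
      match dm_decode a, dm_decode b with
      | Some u, Some v => Some (DR u v) | _, _ => None end
  | _ => None
  end.
Lemma dm_codeK : pcancel dm_code dm_decode.
Proof. by elim=> //= u -> v ->. Qed.
HB.instance Definition _ := Countable.copy dmono (pcan_type dm_codeK).

(* Free nonassociative algebra Alg<X> (as a k-vector space with basis nmono),
   and the free dialgebra (basis dmono), used as representatives of DiAlg0<X>. *)
Definition Alg (k : fieldType) := {freeg nmono / k}.
Definition DiAlg (k : fieldType) := {freeg dmono / k}.

Fixpoint nleaves (m : nmono) : seq nat :=
  match m with NVar i => [:: i] | NMul u v => nleaves u ++ nleaves v end.
Fixpoint dleaves (m : dmono) : seq nat :=
  match m with
  | DVar i => [:: i] | DL u v => dleaves u ++ dleaves v
  | DR u v => dleaves u ++ dleaves v end.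

Definition multilin_in (k : fieldType) (n : nat) (g : Alg k) : Prop :=
  forall m, m \in dom g -> perm_eq (nleaves m) (iota 1 n).
Definition dmultilin_in (k : fieldType) (n : nat) (f : DiAlg k) : Prop :=
  forall m, m \in dom f -> perm_eq (dleaves m) (iota 1 n).
Definition multilinear (k : fieldType) (g : Alg k) : Prop :=
  exists S : seq nat, uniq S /\ forall m, m \in dom g -> perm_eq (nleaves m) S.
Definition dmultilinear (k : fieldType) (f : DiAlg k) : Prop :=
  exists S : seq nat, uniq S /\ forall m, m \in dom f -> perm_eq (dleaves m) S.

Fixpoint central (m : dmono) : nat :=
  match m with DVar a => a | DL _ w2 => central w2 | DR w1 _ => central w1 end.

Fixpoint dbar (m : dmono) : nmono :=
  match m with
  | DVar a => NVar a | DL u v => NMul (dbar u) (dbar v)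
  | DR u v => NMul (dbar u) (dbar v) end.
Definition bar (k : fieldType) (f : DiAlg k) : Alg k :=
  fglift (fun m => << dbar m >> : Alg k) f.

Fixpoint psi_mono (i : nat) (w : nmono) : dmono :=
  match w with
  | NVar a => DVar a
  | NMul u v => if i \in nleaves u then DR (psi_mono i u) (psi_mono i v)
                else DL (psi_mono i u) (psi_mono i v)
  end.
Definition Psi (k : fieldType) (i : nat) (g : Alg k) : DiAlg k :=
  fglift (fun m => << psi_mono i m >> : DiAlg k) g.

Definition central_part (k : fieldType) (j : nat) (f : DiAlg k) : DiAlg k :=
  \sum_(m <- dom f | central m == j) << coeff m f *g m >>.

Record nalg (k : fieldType) := NAlg {
  ncar :> lmodType k;
  nmul : ncar -> ncar -> ncar;
  nmulDl : forall (a : k) (x y z : ncar), nmul (a *: x + y) z = a *: nmul x z + nmul y z;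
  nmulDr : forall (a : k) (x y z : ncar), nmul z (a *: x + y) = a *: nmul z x + nmul z y
}.

Fixpoint neval (k : fieldType) (A : nalg k) (s : nat -> A) (m : nmono) : A :=
  match m with
  | NVar i => s i
  | NMul u v => nmul (neval s u) (neval s v)
  end.
Definition peval (k : fieldType) (A : nalg k) (s : nat -> A) (g : Alg k) : A :=
  fglift (neval s) g.
Definition nvanishes (k : fieldType) (A : nalg k) (g : Alg k) : Prop :=
  forall s : nat -> A, peval s g = 0.

Definition x_ (i : nat) : nmono := NVar i.
Definition Jpoly (k : fieldType) : Alg k :=
    << NMul (x_ 1) (NMul (x_ 2) (NMul (x_ 3) (x_ 4))) >>
  + << NMul (NMul (x_ 2) (NMul (x_ 1) (x_ 3))) (x_ 4) >>
  + << NMul (x_ 3) (NMul (x_ 2) (NMul (x_ 1) (x_ 4))) >>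
  - << NMul (NMul (x_ 1) (x_ 2)) (NMul (x_ 3) (x_ 4)) >>
  - << NMul (NMul (x_ 1) (x_ 3)) (NMul (x_ 2) (x_ 4)) >>
  - << NMul (NMul (x_ 3) (x_ 2)) (NMul (x_ 1) (x_ 4)) >>.

Definition is_jordan (k : fieldType) (A : nalg k) : Prop :=
  (forall x y : A, nmul x y = nmul y x) /\ nvanishes A (Jpoly k).

Definition is_assoc (k : fieldType) (A : nalg k) : Prop :=
  forall x y z : A, nmul (nmul x y) z = nmul x (nmul y z).

Definition is_special_jordan (k : fieldType) (J : nalg k) : Prop :=
  is_jordan J /\
  exists (A : nalg k) (phi : J -> A),
    is_assoc A /\ injective phi /\
    (forall (a : k) (x y : J), phi (a *: x + y) = a *: phi x + phi y) /\
    (forall x y : J,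
       phi (nmul x y) = 2%:R^-1 *: (nmul (phi x) (phi y) + nmul (phi y) (phi x))).

Definition SId (k : fieldType) (g : Alg k) : Prop :=
  multilinear g /\
  (forall A : nalg k, is_special_jordan A -> nvanishes A g) /\
  ~ (forall A : nalg k, is_jordan A -> nvanishes A g).

Record dialg (k : fieldType) := DiA {
  dcar :> lmodType k;
  dl : dcar -> dcar -> dcar;
  dr : dcar -> dcar -> dcar;
  dlDl : forall (a : k) (x y z : dcar), dl (a *: x + y) z = a *: dl x z + dl y z;
  dlDr : forall (a : k) (x y z : dcar), dl z (a *: x + y) = a *: dl z x + dl z y;
  drDl : forall (a : k) (x y z : dcar), dr (a *: x + y) z = a *: dr x z + dr y z;
  drDr : forall (a : k) (x y z : dcar), dr z (a *: x + y) = a *: dr z x + dr z y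
}.

Fixpoint deval (k : fieldType) (D : dialg k) (s : nat -> D) (m : dmono) : D :=
  match m with
  | DVar i => s i
  | DL u v => dl (deval s u) (deval s v)
  | DR u v => dr (deval s u) (deval s v)
  end.
Definition dpeval (k : fieldType) (D : dialg k) (s : nat -> D) (f : DiAlg k) : D :=
  fglift (deval s) f.
Definition dvanishes (k : fieldType) (D : dialg k) (f : DiAlg k) : Prop :=
  forall s : nat -> D, dpeval s f = 0.

Definition is_0dialg (k : fieldType) (D : dialg k) : Prop :=
  (forall x y z : D, dl (dr x y) z = dl (dl x y) z) /\
  (forall x y z : D, dr x (dl y z) = dr x (dr y z)).

Definition is_jordan_dialg (k : fieldType) (D : dialg k) : Prop :=
  is_0dialg D /\ (forall x y : D, dl x y = dr y x) /\
  (forall i, 1 <= i <= 4 -> dvanishes D (Psi i (Jpoly k)))%N.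

Definition is_assoc_dialg (k : fieldType) (D : dialg k) : Prop :=
  is_0dialg D /\
  (forall x y z : D, dl (dl x y) z = dl x (dl y z)) /\
  (forall x y z : D, dr (dr x y) z = dr x (dr y z)) /\
  (forall x y z : D, dr (dl x y) z = dl x (dr y z)).

Definition is_special_jordan_dialg (k : fieldType) (J : dialg k) : Prop :=
  is_jordan_dialg J /\
  exists (D : dialg k) (phi : J -> D),
    is_assoc_dialg D /\ injective phi /\
    (forall (a : k) (x y : J), phi (a *: x + y) = a *: phi x + phi y) /\
    (forall x y : J,
       phi (dl x y) = 2%:R^-1 *: (dl (phi x) (phi y) + dr (phi y) (phi x))) /\
    (forall x y : J,
       phi (dr x y) = 2%:R^-1 *: (dr (phi x) (phi y) + dl (phi y) (phi x))).

Definition DiSId (k : fieldType) (f : DiAlg k) : Prop :=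
  dmultilinear f /\
  (forall D : dialg k, is_special_jordan_dialg D -> dvanishes D f) /\
  ~ (forall D : dialg k, is_jordan_dialg D -> dvanishes D f).

(* Main.v *)
Require Import Defs.
From HB Require Import structures.
From mathcomp Require Import all_boot all_order all_algebra.
From mathcomp Require Import freeg.
From mathcomp Require Import boolp.
Import GRing.Theory.
Local Open Scope ring_scope.
Set Implicit Arguments. Unset Strict Implicit.

Section FG.
Variable k : fieldType.

HB.instance Definition _ (K : choiceType) (M : lmodType k) (f : K -> M) :=
  GRing.isAdditive.Build {freeg K / k} M (fglift f) (lift_is_additive f).

Lemma fgliftD (K : choiceType) (M : lmodType k) (f : K -> M) (x y : {freeg K / k}) :
  fglift f (x + y) = fglift f x + fglift f y.
Proof. exact: raddfD. Qed.
Lemma fgliftB (K : choiceType) (M : lmodType k) (f : K -> M) (x y : {freeg K / k}) :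
  fglift f (x - y) = fglift f x - fglift f y.
Proof. exact: raddfB. Qed.
Lemma fglift_sum (K : choiceType) (M : lmodType k) (f : K -> M) (I : Type) (r : seq I) P (F : I -> {freeg K / k}) :
  fglift f (\sum_(i <- r | P i) F i) = \sum_(i <- r | P i) fglift f (F i).
Proof. exact: raddf_sum. Qed.
Lemma fgliftU1 (K : choiceType) (M : lmodType k) (f : K -> M) x :
  fglift f << x >> = f x.
Proof. by rewrite liftU scale1r. Qed.

Lemma fgliftE (K : choiceType) (M : lmodType k) (f : K -> M) (D : {freeg K / k}) :
  fglift f D = \sum_(x <- dom D) coeff x D *: f x.
Proof.
rewrite -{1}[D]freeg_sumE raddf_sum; apply: eq_bigr => x _; exact: liftU.
Qed.

Lemma fgliftE_sub (K : choiceType) (M : lmodType k) (f : K -> M) (D : {freeg K / k}) s :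
  uniq s -> {subset dom D <= s} -> fglift f D = \sum_(x <- s) coeff x D *: f x.
Proof.
move=> us sD; rewrite fgliftE [RHS](bigID (fun x => x \in dom D)) /=.
rewrite [X in _ + X]big1 ?addr0; last first.
  by move=> x /coeff_outdom ->; rewrite scale0r.
rewrite -[RHS]big_filter; apply: perm_big; apply: uniq_perm.
idtac.
- exact: uniq_dom.
- exact: filter_uniq.
- move=> x; rewrite mem_filter; case: (boolP (x \in dom D)) => //= /sD ->//.
Qed.

Lemma fgliftZ (K : choiceType) (M : lmodType k) (f : K -> M) c (D : {freeg K / k}) :
  fglift f (c *: D) = c *: fglift f D.
Proof.
rewrite (fgliftE_sub f (uniq_dom D) (@domZ_subset _ _ c D)) fgliftE scaler_sumr.
by apply: eq_bigr => x _; rewrite coeffZ scalerA.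
Qed.

Lemma fglift_comp (K1 K2 : choiceType) (M : lmodType k) (h : K1 -> K2) (F : K2 -> M)
  (g : {freeg K1 / k}) :
  fglift F (fglift (fun m => << h m >> : {freeg K2 / k}) g) = fglift (fun m => F (h m)) g.
Proof.
rewrite [fglift (fun m => _) g]fgliftE raddf_sum fgliftE; apply: eq_bigr => x _.
by rewrite -[LHS]/(fglift F _) fgliftZ liftU scale1r.
Qed.

Lemma dom_fglift_sub (K1 K2 : choiceType) (h : K1 -> K2) (g : {freeg K1 / k}) :
  {subset dom (fglift (fun m => << h m >> : {freeg K2 / k}) g) <= map h (dom g)}.
Proof.
rewrite fgliftE => x /dom_sum_subset /flattenP [s /mapP [y]].
rewrite filter_predT => yg -> /domZ_subset; rewrite domU1 inE => /eqP ->.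
exact: map_f.
Qed.

Lemma fglift_lin (K : choiceType) (M N : lmodType k) (f : K -> M) (L : M -> N)
  (HL : forall (a : k) x y, L (a *: x + y) = a *: L x + L y) (D : {freeg K / k}) :
  L (fglift f D) = fglift (fun m => L (f m)) D.
Proof.
have L0 : L 0 = 0.
  have h := HL 1 0 0; rewrite !scale1r addr0 in h.
  by apply: (@addrI _ (L 0)); rewrite addr0 -h.
rewrite !fgliftE; elim: (dom D) => [|x s IH]; rewrite ?big_nil // !big_cons.
by rewrite HL IH.
Qed.

End FG.

Section Bilin.
Variables (k : fieldType) (V W U : lmodType k) (b : V -> W -> U).
Hypothesis hl : forall (a : k) x y z, b (a *: x + y) z = a *: b x z + b y z.
Hypothesis hr : forall (a : k) x y z, b z (a *: x + y) = a *: b z x + b z y.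

Lemma bDl x y z : b (x + y) z = b x z + b y z.
Proof. by have := hl 1 x y z; rewrite !scale1r. Qed.
Lemma bDr x y z : b z (x + y) = b z x + b z y.
Proof. by have := hr 1 x y z; rewrite !scale1r. Qed.
Lemma b0l z : b 0 z = 0.
Proof. by apply: (@addrI _ (b 0 z)); rewrite -bDl !addr0. Qed.
Lemma b0r z : b z 0 = 0.
Proof. by apply: (@addrI _ (b z 0)); rewrite -bDr !addr0. Qed.
Lemma bZl a x z : b (a *: x) z = a *: b x z.
Proof. by rewrite -[a *: x]addr0 hl b0l addr0. Qed.
Lemma bZr a x z : b z (a *: x) = a *: b z x.
Proof. by rewrite -[a *: x]addr0 hr b0r addr0. Qed.
Lemma bNl x z : b (- x) z = - b x z.
Proof. by rewrite -scaleN1r bZl scaleN1r. Qed.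
Lemma bNr x z : b z (- x) = - b z x.
Proof. by rewrite -scaleN1r bZr scaleN1r. Qed.
Lemma bBl x y z : b (x - y) z = b x z - b y z.
Proof. by rewrite bDl bNl. Qed.
Lemma bBr x y z : b z (x - y) = b z x - b z y.
Proof. by rewrite bDr bNr. Qed.
Lemma b_suml (I : Type) (r : seq I) (F : I -> V) z :
  b (\sum_(i <- r) F i) z = \sum_(i <- r) b (F i) z.
Proof. elim: r => [|x r IH]; rewrite ?big_nil ?b0l // !big_cons bDl IH //. Qed.
Lemma b_sumr (I : Type) (r : seq I) (F : I -> W) z :
  b z (\sum_(i <- r) F i) = \sum_(i <- r) b z (F i).
Proof. elim: r => [|x r IH]; rewrite ?big_nil ?b0r // !big_cons bDr IH //. Qed.
End Bilin.

Lemma dleaves_psi i w : dleaves (psi_mono i w) = nleaves w.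
Proof. by elim: w => //= u IHu v IHv; case: ifP => /= _; rewrite IHu IHv. Qed.
Lemma dbar_psi i w : dbar (psi_mono i w) = w.
Proof. by elim: w => //= u IHu v IHv; case: ifP => /= _; rewrite IHu IHv. Qed.
Lemma nleaves_dbar m : nleaves (dbar m) = dleaves m.
Proof. by elim: m => //= u IHu v IHv; rewrite IHu IHv. Qed.
Lemma central_in m : central m \in dleaves m.
Proof. by elim: m => [a|u IHu v IHv|u IHu v IHv] /=; rewrite ?inE ?mem_cat ?IHu ?IHv ?orbT. Qed.

Section Main.
Variable k : fieldType.

Lemma JpolyE (M : lmodType k) (G : nmono -> M) :
  fglift G (Jpoly k) =
    G (NMul (x_ 1) (NMul (x_ 2) (NMul (x_ 3) (x_ 4))))
  + G (NMul (NMul (x_ 2) (NMul (x_ 1) (x_ 3))) (x_ 4))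
  + G (NMul (x_ 3) (NMul (x_ 2) (NMul (x_ 1) (x_ 4))))
  - G (NMul (NMul (x_ 1) (x_ 2)) (NMul (x_ 3) (x_ 4)))
  - G (NMul (NMul (x_ 1) (x_ 3)) (NMul (x_ 2) (x_ 4)))
  - G (NMul (NMul (x_ 3) (x_ 2)) (NMul (x_ 1) (x_ 4))).
Proof. by rewrite /Jpoly !fgliftB !fgliftD !fgliftU1. Qed.

Lemma fglift_eq_in (K : choiceType) (M : lmodType k) (F G : K -> M) (D : {freeg K / k}) :
  {in dom D, F =1 G} -> fglift F D = fglift G D.
Proof. by move=> FG; rewrite !fgliftE; apply: eq_big_seq => x /FG ->. Qed.

End Main.

Ltac ac_sum :=
  rewrite -[LHS]addr0 -[RHS]addr0 -?addrA;
  repeat match goal with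
  | |- ?a + _ = _ => rewrite ?[in RHS](addrCA _ a); congr (a + _)
  end.

Section Sym.
Variables (k : fieldType) (V U : lmodType k) (b1 b2 : V -> V -> U) (c : k).
Hypothesis h1l : forall (a : k) x y z, b1 (a *: x + y) z = a *: b1 x z + b1 y z.
Hypothesis h1r : forall (a : k) x y z, b1 z (a *: x + y) = a *: b1 z x + b1 z y.
Hypothesis h2l : forall (a : k) x y z, b2 (a *: x + y) z = a *: b2 x z + b2 y z.
Hypothesis h2r : forall (a : k) x y z, b2 z (a *: x + y) = a *: b2 z x + b2 z y.

Lemma symDl a x y z : c *: (b1 (a *: x + y) z + b2 z (a *: x + y)) =
  a *: (c *: (b1 x z + b2 z x)) + c *: (b1 y z + b2 z y).
Proof.
rewrite h1l h2r !scalerDr !scalerA [c * a]mulrC.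
by rewrite addrACA.
Qed.
Lemma symDr a x y z : c *: (b1 z (a *: x + y) + b2 (a *: x + y) z) =
  a *: (c *: (b1 z x + b2 x z)) + c *: (b1 z y + b2 y z).
Proof.
rewrite h1r h2l !scalerDr !scalerA [c * a]mulrC.
by rewrite addrACA.
Qed.
End Sym.

Lemma sub6 (V : zmodType) (a b c d e f : V) : a + b + c = d + e + f -> a + b + c - d - e - f = 0.
Proof. by move=> h; apply/eqP; rewrite -!addrA -!opprD !addrA subr_eq0 h. Qed.

Section Plus.
Variables (k : fieldType) (A : nalg k).

Definition pmul (x y : A) : A := 2%:R^-1 *: (nmul x y + nmul y x).
Lemma pmulDl a (x y z : A) : pmul (a *: x + y) z = a *: pmul x z + pmul y z.
Proof. rewrite /pmul; exact: (symDl _ (@nmulDl _ A) (@nmulDr _ A)). Qed.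
Lemma pmulDr a (x y z : A) : pmul z (a *: x + y) = a *: pmul z x + pmul z y.
Proof. rewrite /pmul; exact: (symDr _ (@nmulDr _ A) (@nmulDl _ A)). Qed.

Definition plus : nalg k := @NAlg k A pmul pmulDl pmulDr.

Let nDl := bDl (@nmulDl _ A).
Let nDr := bDr (@nmulDr _ A).
Let nZl := bZl (@nmulDl _ A).
Let nZr := bZr (@nmulDr _ A).

Definition qm (x y : A) := nmul x y + nmul y x.
Lemma qZl a x y : qm (a *: x) y = a *: qm x y.
Proof. by rewrite /qm nZl nZr scalerDr. Qed.
Lemma qZr a x y : qm x (a *: y) = a *: qm x y.
Proof. by rewrite /qm nZl nZr scalerDr. Qed.

Lemma plus_special : is_assoc A -> is_special_jordan plus.
Proof.
move=> HA; split; last first.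
  exists A, id; split => //; split => //; split => //.
split.
  by move=> x y; rewrite /= /pmul addrC.
move=> s; rewrite /peval JpolyE /=.
set x1 := s 1%N; set x2 := s 2%N; set x3 := s 3%N; set x4 := s 4%N.
have pq : forall x y, pmul x y = 2%:R^-1 *: qm x y by [].
rewrite !pq !(qZl, qZr) !scalerA -!scalerDr -!scalerBr.
set Q1 := qm x1 _; set Q2 := qm (qm x2 _) _; set Q3 := qm x3 _.
set Q4 := qm (qm x1 x2) _; set Q5 := qm (qm x1 x3) _; set Q6 := qm (qm x3 x2) _.
have key : Q1 + Q2 + Q3 = Q4 + Q5 + Q6.
  rewrite /Q1 /Q2 /Q3 /Q4 /Q5 /Q6 /qm !(nDl, nDr) !HA.
  ac_sum.
by rewrite (sub6 key) scaler0.
Qed.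
End Plus.

Lemma scaleD_pair (k : fieldType) (V W : lmodType k) (a : k) (x1 x2 : V) (y1 y2 : W) :
  a *: ((x1, y1) + (x2, y2)) = (a *: (x1 + x2), a *: (y1 + y2)).
Proof. by []. Qed.

Lemma pair_ext (V W : Type) (p q : V * W) : p.1 = q.1 -> p.2 = q.2 -> p = q.
Proof. by case: p q => [? ?] [? ?] /= -> ->. Qed.
Lemma fst_add (k : fieldType) (V W : lmodType k) (p q : V * W) : (p + q).1 = p.1 + q.1.
Proof. by []. Qed.
Lemma snd_add (k : fieldType) (V W : lmodType k) (p q : V * W) : (p + q).2 = p.2 + q.2.
Proof. by []. Qed.
Lemma fst_scale (k : fieldType) (V W : lmodType k) (a : k) (p : V * W) : (a *: p).1 = a *: p.1.
Proof. by []. Qed.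
Lemma snd_scale (k : fieldType) (V W : lmodType k) (a : k) (p : V * W) : (a *: p).2 = a *: p.2.
Proof. by []. Qed.
Lemma fst0 (k : fieldType) (V W : lmodType k) : (0 : V * W).1 = 0.
Proof. by []. Qed.
Lemma snd0 (k : fieldType) (V W : lmodType k) : (0 : V * W).2 = 0.
Proof. by []. Qed.
Lemma fst_opp (k : fieldType) (V W : lmodType k) (p : V * W) : (- p).1 = - p.1.
Proof. by []. Qed.
Lemma snd_opp (k : fieldType) (V W : lmodType k) (p : V * W) : (- p).2 = - p.2.
Proof. by []. Qed.
Definition prodE := (fst_add, snd_add, fst_scale, snd_scale, fst0, snd0, fst_opp, snd_opp).

Section Dia.
Variables (k : fieldType) (A : nalg k).
Definition dia_of : dialg k :=
  @DiA k A (@nmul _ A) (@nmul _ A) (@nmulDl _ A) (@nmulDr _ A) (@nmulDl _ A) (@nmulDr _ A).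
Lemma deval_dia s i w : @deval k dia_of s (psi_mono i w) = neval s w.
Proof. by elim: w => //= u IHu v IHv; case: ifP => _ /=; rewrite IHu IHv. Qed.
Lemma Psi_dia s i g : @dpeval k dia_of s (Psi i g) = peval s g.
Proof.
rewrite /dpeval /Psi fglift_comp; apply: fglift_eq_in => m _; exact: deval_dia.
Qed.
End Dia.

Section Hat1.
Variables (k : fieldType) (D : dialg k).
Hypothesis HD : is_assoc_dialg D.

Let ax1 : forall x y z : D, dl (dr x y) z = dl (dl x y) z := HD.1.1.
Let ax2 : forall x y z : D, dr x (dl y z) = dr x (dr y z) := HD.1.2.
Let dlA : forall x y z : D, dl (dl x y) z = dl x (dl y z) := HD.2.1.
Let drA : forall x y z : D, dr (dr x y) z = dr x (dr y z) := HD.2.2.1.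
Let mixA : forall x y z : D, dr (dl x y) z = dl x (dr y z) := HD.2.2.2.

Let lDl := bDl (@dlDl _ D).
Let lDr := bDr (@dlDr _ D).
Let rDl := bDl (@drDl _ D).
Let rDr := bDr (@drDr _ D).
Let l0l := b0l (@dlDl _ D).
Let l0r := b0r (@dlDr _ D).
Let r0l := b0l (@drDl _ D).
Let r0r := b0r (@drDr _ D).
Let lZl := bZl (@dlDl _ D).
Let lZr := bZr (@dlDr _ D).
Let rZl := bZl (@drDl _ D).
Let rZr := bZr (@drDr _ D).

Definition hm (p q : D * D) : D * D := (dr p.1 q.1, dl p.1 q.2 + dr p.2 q.1).

Lemma hmDl a (p q r : D * D) : hm (a *: p + q) r = a *: hm p r + hm q r.
Proof.
apply: pair_ext; rewrite /hm !prodE /=.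
  by rewrite (@drDl _ D).
by rewrite (@dlDl _ D) (@drDl _ D) scalerDr addrACA.
Qed.
Lemma hmDr a (p q r : D * D) : hm r (a *: p + q) = a *: hm r p + hm r q.
Proof.
apply: pair_ext; rewrite /hm !prodE /=.
  by rewrite (@drDr _ D).
by rewrite (@dlDr _ D) (@drDr _ D) scalerDr addrACA.
Qed.

Definition Hn : nalg k := @NAlg k (D * D)%type hm hmDl hmDr.

Lemma Hn_assoc : is_assoc Hn.
Proof.
move=> [u x] [v y] [w z] /=; rewrite /hm /=; congr (_, _); first exact: drA.
rewrite rDl lDr ax1 dlA mixA drA; ac_sum.
Qed.

Definition dlp (x y : D) : D := 2%:R^-1 *: (dl x y + dr y x).
Definition drp (x y : D) : D := 2%:R^-1 *: (dr x y + dl y x).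
Lemma dlpDl a x y z : dlp (a *: x + y) z = a *: dlp x z + dlp y z.
Proof. rewrite /dlp; exact: (symDl _ (@dlDl _ D) (@drDr _ D)). Qed.
Lemma dlpDr a x y z : dlp z (a *: x + y) = a *: dlp z x + dlp z y.
Proof. rewrite /dlp; exact: (symDr _ (@dlDr _ D) (@drDl _ D)). Qed.
Lemma drpDl a x y z : drp (a *: x + y) z = a *: drp x z + drp y z.
Proof. rewrite /drp; exact: (symDl _ (@drDl _ D) (@dlDr _ D)). Qed.
Lemma drpDr a x y z : drp z (a *: x + y) = a *: drp z x + drp z y.
Proof. rewrite /drp; exact: (symDr _ (@drDr _ D) (@dlDl _ D)). Qed.

Definition Dplus : dialg k := @DiA k D dlp drp dlpDl dlpDr drpDl drpDr.

Definition hats (t : nat -> D) (i : nat) : nat -> plus Hn :=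
  fun l => if l == i then (0, t l) else (t l, 0).

Lemma hatA t i w : i \notin nleaves w ->
  [/\ (neval (hats t i) w).2 = 0,
      (forall y, @dl k D (neval (hats t i) w).1 y = @dl k D (@deval k Dplus t (psi_mono i w)) y)
    & (forall y, @dr k D y (neval (hats t i) w).1 = @dr k D y (@deval k Dplus t (psi_mono i w)))].
Proof.
elim: w => [a|u IHu v IHv] /=.
  rewrite inE eq_sym => /negbTE ai; rewrite /hats ai /=; split => //.
rewrite mem_cat negb_or => /andP [iu iv]; rewrite (negbTE iu).
have [su lu ru] := IHu iu; have [sv lv rv] := IHv iv.
move: su lu ru sv lv rv.
set Nu := neval _ u; set Nv := neval _ v.
set eu := deval _ (psi_mono i u); set ev := deval _ (psi_mono i v).
case: Nu => cu xu; case: Nv => cv xv /= -> lu ru -> lv rv.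
rewrite /pmul /hm /= !l0r !r0l !addr0 scaler0; split => //.
- move=> y; rewrite /dlp !lZl !lDl; congr (_ *: _); congr (_ + _).
    by rewrite ax1 dlA lu lv -dlA.
  by rewrite ax1 dlA lv lu -dlA -ax1.
- move=> y; rewrite /dlp !rZr !rDr; congr (_ *: _); congr (_ + _).
    by rewrite -drA ru rv drA -ax2.
  by rewrite -drA rv ru drA.
Qed.

Lemma hatB t i w : count_mem i (nleaves w) = 1%N ->
  neval (hats t i) w = (0, @deval k Dplus t (psi_mono i w)).
Proof.
elim: w => [a|u IHu v IHv] /=.
  by rewrite addn0; case: eqP => [->|] // _; rewrite /hats eqxx.
rewrite count_cat; case iu: (i \in nleaves u) => Hc.
  have cu0 : (0 < count_mem i (nleaves u))%N by rewrite -has_count has_pred1.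
  have cv : count_mem i (nleaves v) = 0%N.
    by apply/eqP; rewrite -leqn0 -(leq_add2l (count_mem i (nleaves u))) addn0 Hc.
  have cu : count_mem i (nleaves u) = 1%N by move: Hc; rewrite cv addn0.
  have iv : i \notin nleaves v by apply/count_memPn.
  rewrite (IHu cu); have [] := hatA t iv.
  case: (neval _ v) => cv' xv /= -> lv rv.
  apply: pair_ext; rewrite /pmul /hm !prodE /=.
    by rewrite ?r0l ?r0r ?addr0 ?scaler0.
  by rewrite ?l0l ?r0r ?l0r ?r0l ?add0r ?addr0 /drp lv rv.
have iu' : i \notin nleaves u by rewrite iu.
have cu : count_mem i (nleaves u) = 0%N by apply/count_memPn.
have cv : count_mem i (nleaves v) = 1%N by move: Hc; rewrite cu.
rewrite (IHv cv); have [] := hatA t iu'.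
case: (neval _ u) => cu' xu /= -> lu ru.
apply: pair_ext; rewrite /pmul /hm !prodE /=.
  by rewrite ?r0l ?r0r ?addr0 ?scaler0.
by rewrite ?l0l ?r0r ?l0r ?r0l ?add0r ?addr0 /dlp lu ru.
Qed.

End Hat1.

Section Part1.
Variable k : fieldType.

Lemma count_iota i n s : perm_eq s (iota 1 n) -> (1 <= i <= n)%N -> count_mem i s = 1%N.
Proof.
move=> /permP -> Hi; rewrite count_uniq_mem ?iota_uniq // mem_iota.
by case/andP: Hi => -> /=; rewrite add1n ltnS => ->.
Qed.

Lemma phi_deval (J D : dialg k) (phi : J -> D)
  (Hl : forall x y : J, phi (dl x y) = 2%:R^-1 *: (dl (phi x) (phi y) + dr (phi y) (phi x)))
  (Hr : forall x y : J, phi (dr x y) = 2%:R^-1 *: (dr (phi x) (phi y) + dl (phi y) (phi x)))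
  s m : phi (deval s m) = @deval k (Dplus D) (fun l => phi (s l)) m.
Proof. by elim: m => //= u IHu v IHv; rewrite ?Hl ?Hr IHu IHv. Qed.

Lemma lin0 (V W : lmodType k) (L : V -> W) :
  (forall (a : k) x y, L (a *: x + y) = a *: L x + L y) -> L 0 = 0.
Proof.
move=> HL; have h := HL 1 0 0; rewrite !scale1r addr0 in h.
by apply: (@addrI _ (L 0)); rewrite addr0 -h.
Qed.

Lemma psi_special (g : Alg k) i n : multilin_in n g -> (1 <= i <= n)%N ->
  (forall A : nalg k, is_special_jordan A -> nvanishes A g) ->
  forall J : dialg k, is_special_jordan_dialg J -> dvanishes J (Psi i g).
Proof.
move=> Hml Hi Hg J [_ [D [phi [HD [inj [lin [Hl Hr]]]]]]] s.
apply: inj; rewrite (lin0 lin).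
rewrite /dpeval (fglift_lin _ lin).
rewrite (fglift_eq_in (G := fun m => @deval k (Dplus D) (fun l => phi (s l)) m)); last first.
  by move=> m _; rewrite phi_deval.
rewrite /Psi fglift_comp.
rewrite (fglift_eq_in (G := fun w => (neval (hats (fun l => phi (s l)) i) w).2)); last first.
  by move=> m mg; rewrite (hatB HD) //; exact: count_iota (Hml m mg) Hi.
have Lsnd : forall (a : k) (x y : D * D), (a *: x + y).2 = a *: x.2 + y.2 by [].
rewrite -(fglift_lin _ Lsnd).
by have := Hg _ (plus_special (Hn_assoc HD)) (hats (fun l => phi (s l)) i); rewrite /peval => ->.
Qed.

Lemma dia_jordan (A : nalg k) : is_jordan A -> is_jordan_dialg (dia_of A).
Proof.
move=> [HC HJ]; split; first by split.
split; first by move=> x y; exact: HC.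
by move=> i _ s; rewrite Psi_dia; exact: HJ.
Qed.

Lemma part1 n (g : Alg k) : multilin_in n g -> SId g ->
  forall i : nat, (1 <= i <= n)%N -> DiSId (Psi i g).
Proof.
move=> Hml [[S [uS HS]] [Hsp Hnj]] i Hi; split.
  exists S; split => // m /dom_fglift_sub /mapP [w wg ->]; rewrite dleaves_psi; exact: HS.
split; first exact: psi_special Hml Hi Hsp.
move=> H; apply: Hnj => A HA s.
by rewrite -(Psi_dia s i); exact: (H _ (dia_jordan HA) s).
Qed.
End Part1.

Lemma nagree (k : fieldType) (A : nalg k) (s1 s2 : nat -> A) w :
  {in nleaves w, s1 =1 s2} -> neval s1 w = neval s2 w.
Proof.
elim: w => [a|u IHu v IHv] /= H; first by apply: H; rewrite inE.
by rewrite IHu ?IHv // => l lw; apply: H; rewrite mem_cat lw ?orbT.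
Qed.

Lemma Jcounts i : (1 <= i <= 4)%N ->
  [/\ count_mem i (nleaves (NMul (x_ 1) (NMul (x_ 2) (NMul (x_ 3) (x_ 4))))) = 1%N,
      count_mem i (nleaves (NMul (NMul (x_ 2) (NMul (x_ 1) (x_ 3))) (x_ 4))) = 1%N,
      count_mem i (nleaves (NMul (x_ 3) (NMul (x_ 2) (NMul (x_ 1) (x_ 4))))) = 1%N &
   [/\ count_mem i (nleaves (NMul (NMul (x_ 1) (x_ 2)) (NMul (x_ 3) (x_ 4)))) = 1%N,
      count_mem i (nleaves (NMul (NMul (x_ 1) (x_ 3)) (NMul (x_ 2) (x_ 4)))) = 1%N &
      count_mem i (nleaves (NMul (NMul (x_ 3) (x_ 2)) (NMul (x_ 1) (x_ 4)))) = 1%N]].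
Proof. by case: i => [|[|[|[|[|i]]]]]. Qed.

Lemma domU_sub (k : fieldType) (K : choiceType) (c : k) (x y : K) :
  x \in dom << c *g y >> -> x = y.
Proof.
rewrite mem_dom coeffU; case: (y =P x) => [->|] //; by rewrite mulr0 eqxx.
Qed.

Section Part2b.
Variable k : fieldType.

Lemma bar_multilin (f : DiAlg k) j : dmultilinear f -> multilinear (bar (central_part j f)).
Proof.
move=> [S [uS HS]]; exists S; split => // m /dom_fglift_sub /mapP [m' m'c ->].
rewrite nleaves_dbar; apply: HS.
move: m'c => /dom_sum_subset /flattenP [s /mapP [y]].
by rewrite mem_filter => /andP [_ yf] -> /domU_sub ->.
Qed.

Section Tilde.
Variable A : nalg k.
Let nDl := bDl (@nmulDl _ A).
Let nDr := bDr (@nmulDr _ A).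
Let n0l := b0l (@nmulDl _ A).
Let n0r := b0r (@nmulDr _ A).

Definition tl (p q : A * A) : A * A := (nmul p.1 q.1, nmul p.1 q.2).
Definition tr (p q : A * A) : A * A := (nmul p.1 q.1, nmul p.2 q.1).
Lemma tlDl a (x y z : A * A) : tl (a *: x + y) z = a *: tl x z + tl y z.
Proof. by apply: pair_ext; rewrite /tl !prodE /= (@nmulDl _ A). Qed.
Lemma tlDr a (x y z : A * A) : tl z (a *: x + y) = a *: tl z x + tl z y.
Proof. by apply: pair_ext; rewrite /tl !prodE /= (@nmulDr _ A). Qed.
Lemma trDl a (x y z : A * A) : tr (a *: x + y) z = a *: tr x z + tr y z.
Proof. by apply: pair_ext; rewrite /tr !prodE /= (@nmulDl _ A). Qed.
Lemma trDr a (x y z : A * A) : tr z (a *: x + y) = a *: tr z x + tr z y.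
Proof. by apply: pair_ext; rewrite /tr !prodE /= (@nmulDr _ A). Qed.

Definition Tdi : dialg k := @DiA k (A * A)%type tl tr tlDl tlDr trDl trDr.

Lemma T_fst (s : nat -> Tdi) m : (deval s m).1 = neval (fun l => (s l).1) (dbar m).
Proof. by elim: m => //= u IHu v IHv; rewrite IHu IHv. Qed.

Definition hatj (a : nat -> A) (j : nat) : nat -> Tdi :=
  fun l => (a l, if l == j then a l else 0).

Lemma T_snd_central a j m :
  (deval (hatj a j) m).2 = if central m == j then neval a (dbar m) else 0.
Proof.
elim: m => [l|u IHu v IHv|u IHu v IHv] /=; first by [].
  by rewrite T_fst IHv; case: ifP => _ //; rewrite n0r.
by rewrite T_fst IHu; case: ifP => _ //; rewrite n0l.
Qed.

Lemma T_psi (s : nat -> Tdi) i w : count_mem i (nleaves w) = 1%N ->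
  (deval s (psi_mono i w)).2 = neval (fun l => if l == i then (s l).2 else (s l).1) w.
Proof.
elim: w => [a|u IHu v IHv] /=.
  by rewrite addn0; case: eqP => [->|] // _; rewrite eqxx.
rewrite count_cat; case iu: (i \in nleaves u) => Hc /=.
  have cu0 : (0 < count_mem i (nleaves u))%N by rewrite -has_count has_pred1.
  have cv : count_mem i (nleaves v) = 0%N.
    by apply/eqP; rewrite -leqn0 -(leq_add2l (count_mem i (nleaves u))) addn0 Hc.
  have cu : count_mem i (nleaves u) = 1%N by move: Hc; rewrite cv addn0.
  have iv : i \notin nleaves v by apply/count_memPn.
  rewrite (IHu cu) T_fst dbar_psi; congr nmul; apply: nagree => l lv /=.
  by case: eqP lv => [->|]; rewrite ?(negbTE iv).
have iu' : i \notin nleaves u by rewrite iu.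
have cu : count_mem i (nleaves u) = 0%N by apply/count_memPn.
have cv : count_mem i (nleaves v) = 1%N by move: Hc; rewrite cu.
rewrite (IHv cv) T_fst dbar_psi; congr nmul; apply: nagree => l lu /=.
by case: eqP lu => [->|]; rewrite ?(negbTE iu').
Qed.

Lemma T_jordan : is_jordan A -> is_jordan_dialg Tdi.
Proof.
move=> [HC HJ]; split; first by split.
split; first by move=> x y; apply: pair_ext; rewrite /= HC.
move=> i Hi s; rewrite /dpeval /Psi fglift_comp JpolyE.
have [c1 c2 c3 [c4 c5 c6]] := Jcounts Hi.
apply: pair_ext; rewrite !prodE.
  rewrite !T_fst !dbar_psi.
  by have := HJ (fun l => (s l).1); rewrite /peval JpolyE.
rewrite !T_psi //.
by have := HJ (fun l => if l == i then (s l).2 else (s l).1); rewrite /peval JpolyE.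
Qed.

End Tilde.

Lemma T_special (A : nalg k) : is_special_jordan A -> is_special_jordan_dialg (Tdi A).
Proof.
move=> [HJ [B [phi [HB [inj [lin Hm]]]]]]; split; first exact: T_jordan.
exists (Tdi B), (fun p => (phi p.1, phi p.2)); split.
  split; first by split.
  split; first by move=> x y z; apply: pair_ext; rewrite /= HB.
  split; first by move=> x y z; apply: pair_ext; rewrite /= HB.
  by move=> x y z; apply: pair_ext; rewrite /= HB.
split.
  move=> [x1 x2] [y1 y2] /= [] /inj -> /inj -> //.
split.
  by move=> a x y; apply: pair_ext; rewrite !prodE /= lin.
split.
  by move=> x y; apply: pair_ext; rewrite !prodE /= Hm.
by move=> x y; apply: pair_ext; rewrite !prodE /= Hm.
Qed.

Lemma bar_eval (A : nalg k) (a : nat -> A) (f : DiAlg k) j :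
  peval a (bar (central_part j f)) =
  \sum_(m <- dom f | central m == j) coeff m f *: neval a (dbar m).
Proof.
rewrite /peval /bar fglift_comp /central_part fglift_sum.
by apply: eq_bigr => m _; rewrite liftU.
Qed.

Lemma bar_special (f : DiAlg k) j :
  (forall D : dialg k, is_special_jordan_dialg D -> dvanishes D f) ->
  forall A : nalg k, is_special_jordan A -> nvanishes A (bar (central_part j f)).
Proof.
move=> Hf A HA a; have := Hf _ (T_special HA) (hatj a j).
have Lsnd : forall (c : k) (x y : A * A), (c *: x + y).2 = c *: x.2 + y.2 by [].
move/(congr1 (fun p : A * A => p.2)); rewrite /dpeval (fglift_lin _ Lsnd) fgliftE.
rewrite bar_eval => H; apply: (etrans _ H); rewrite big_mkcond /=.
by apply: eq_bigr => m _; rewrite T_snd_central; case: ifP => _; rewrite ?scaler0.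
Qed.

End Part2b.

Lemma big_if1 (k : fieldType) (V : lmodType k) (r : seq nat) (c : nat) (X : V) :
  uniq r -> c \in r -> \sum_(l <- r) (if l == c then X else 0) = X.
Proof.
elim: r => [|x r IH] //= /andP [xr ur]; rewrite inE big_cons.
case E: (x == c).
  move/eqP: E => E; rewrite E in xr *; move=> _.
  rewrite big1_seq ?addr0 // => l /andP [_ lr]; case: eqP => // el.
  by rewrite -el lr in xr.
rewrite add0r => /orP [/eqP e|]; [by rewrite e eqxx in E | exact: IH].
Qed.

Record Eel (k : fieldType) (D : dialg k) := ME { ef : D -> D; eP : exists u, ef = @dl k D u }.
HB.instance Definition _ (k : fieldType) (D : dialg k) := gen_eqMixin (Eel D).
HB.instance Definition _ (k : fieldType) (D : dialg k) := gen_choiceMixin (Eel D).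

Section EelOps.
Variables (k : fieldType) (D : dialg k).
Implicit Types (F G H : Eel D).
Let lDl := bDl (@dlDl _ D).
Let l0l := b0l (@dlDl _ D).
Let lNl := bNl (@dlDl _ D).
Let lZl := bZl (@dlDl _ D).

Lemma Eel_eq F G : ef F = ef G -> F = G.
Proof. case: F G => [f fP] [g gP] /= e; subst g; congr ME; exact: Prop_irrelevance. Qed.

Definition mk (u : D) : Eel D := @ME _ D (dl u) (ex_intro _ u erefl).

Lemma eadd_p F G : exists w, (fun y => ef F y + ef G y) = dl w.
Proof. case: F G => [f [u fu]] [g [v gv]] /=; exists (u + v); apply: funext => y; by rewrite fu gv lDl. Qed.
Lemma ezero_p : exists w, (fun y : D => (0 : D)) = dl w.
Proof. by exists 0; apply: funext => y; rewrite l0l. Qed.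
Lemma eopp_p F : exists w, (fun y => - ef F y) = dl w.
Proof. case: F => [f [u fu]] /=; exists (- u); apply: funext => y; by rewrite fu lNl. Qed.
Lemma escale_p (a : k) F : exists w, (fun y => a *: ef F y) = dl w.
Proof. case: F => [f [u fu]] /=; exists (a *: u); apply: funext => y; by rewrite fu lZl. Qed.

Definition eadd F G := ME (eadd_p F G).
Definition ezero := ME ezero_p.
Definition eopp F := ME (eopp_p F).
Definition escale a F := ME (escale_p a F).

Lemma eaddA : associative eadd.
Proof. by move=> F G H; apply: Eel_eq; apply: funext => y /=; rewrite addrA. Qed.
Lemma eaddC : commutative eadd.
Proof. by move=> F G; apply: Eel_eq; apply: funext => y /=; rewrite addrC. Qed.
Lemma eadd0 : left_id ezero eadd.
Proof. by move=> F; apply: Eel_eq; apply: funext => y /=; rewrite add0r. Qed.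
Lemma eaddN : left_inverse ezero eopp eadd.
Proof. by move=> F; apply: Eel_eq; apply: funext => y /=; rewrite addNr. Qed.

HB.instance Definition _ := GRing.isZmodule.Build (Eel D) eaddA eaddC eadd0 eaddN.

Lemma escaleA a b F : escale a (escale b F) = escale (a * b) F.
Proof. by apply: Eel_eq; apply: funext => y /=; rewrite scalerA. Qed.
Lemma escale1 F : escale 1 F = F.
Proof. by apply: Eel_eq; apply: funext => y /=; rewrite scale1r. Qed.
Lemma escaleDr a F G : escale a (F + G) = escale a F + escale a G.
Proof. by apply: Eel_eq; apply: funext => y /=; rewrite scalerDr. Qed.
Lemma escaleDl F a b : escale (a + b) F = escale a F + escale b F.
Proof. by apply: Eel_eq; apply: funext => y /=; rewrite scalerDl. Qed.

HB.instance Definition _ := GRing.Zmodule_isLmodule.Build k (Eel D) escaleA escale1 escaleDr escaleDl.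

Lemma efD F G y : ef (F + G) y = ef F y + ef G y. Proof. by []. Qed.
Lemma efZ a F y : ef (a *: F) y = a *: ef F y. Proof. by []. Qed.
Lemma efN F y : ef (- F) y = - ef F y. Proof. by []. Qed.
Lemma ef0 y : ef (0 : Eel D) y = 0. Proof. by []. Qed.
Lemma ef_mk u : ef (mk u) = dl u. Proof. by []. Qed.
End EelOps.

Lemma dagree (k : fieldType) (D : dialg k) (s1 s2 : nat -> D) m :
  {in dleaves m, s1 =1 s2} -> deval s1 m = deval s2 m.
Proof.
elim: m => [a|u IHu v IHv|u IHu v IHv] /= H; first by apply: H; rewrite inE.
  by rewrite IHu ?IHv // => l lw; apply: H; rewrite mem_cat lw ?orbT.
by rewrite IHu ?IHv // => l lw; apply: H; rewrite mem_cat lw ?orbT.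
Qed.

Section Hat2.
Variables (k : fieldType) (D : dialg k).
Hypothesis HD : is_jordan_dialg D.

Let ax1 : forall x y z : D, dl (dr x y) z = dl (dl x y) z := HD.1.1.
Let comm : forall x y : D, dl x y = dr y x := HD.2.1.
Let psiJ : forall i, (1 <= i <= 4)%N -> dvanishes D (Psi i (Jpoly k)) := HD.2.2.

Let lDl := bDl (@dlDl _ D).
Let lDr := bDr (@dlDr _ D).
Let rDl := bDl (@drDl _ D).
Let rDr := bDr (@drDr _ D).
Let l0l := b0l (@dlDl _ D).
Let l0r := b0r (@dlDr _ D).
Let r0l := b0l (@drDl _ D).
Let r0r := b0r (@drDr _ D).
Let lBl := bBl (@dlDl _ D).
Let lBr := bBr (@dlDr _ D).
Let rBl := bBl (@drDl _ D).
Let rBr := bBr (@drDr _ D).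
Let lNl := bNl (@dlDl _ D).

Definition inK (x : D) := forall z, dl x z = 0.
Lemma inK0 : inK 0. Proof. by move=> z; rewrite l0l. Qed.
Lemma inKD x y : inK x -> inK y -> inK (x + y).
Proof. by move=> hx hy z; rewrite lDl hx hy addr0. Qed.
Lemma inKN x : inK x -> inK (- x).
Proof. by move=> hx z; rewrite lNl hx oppr0. Qed.
Lemma inK_dr_l i y : inK i -> inK (dr i y).
Proof. by move=> hi z; rewrite ax1 hi l0l. Qed.
Lemma inK_dl_l i y : inK i -> inK (dl i y).
Proof. by move=> hi; rewrite hi; exact: inK0. Qed.
Lemma inK_dl_r i y : inK i -> inK (dl y i).
Proof. by move=> hi; rewrite comm; exact: inK_dr_l. Qed.
Lemma inK_dr_r i y : inK i -> inK (dr y i).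
Proof. by move=> hi; rewrite -comm hi; exact: inK0. Qed.
Lemma inK_gen x y : inK (dl x y - dr x y).
Proof. by move=> z; rewrite lBl ax1 subrr. Qed.
Lemma inK_eq x y : inK (x - y) -> forall z, dl x z = dl y z.
Proof. by move=> h z; apply/eqP; rewrite -subr_eq0 -lBl h. Qed.
Lemma eq_inK x y : (forall z, dl x z = dl y z) -> inK (x - y).
Proof. by move=> h z; rewrite lBl h subrr. Qed.

Lemma split3 (x y z : D) : x - z = (x - y) + (y - z).
Proof. by rewrite addrA subrK. Qed.

Lemma Kbar (t1 t2 : nat -> D) : (forall l, inK (t1 l - t2 l)) ->
  forall u v, dbar u = dbar v -> inK (deval t1 u - deval t2 v).
Proof.
move=> Ht; elim=> [a|u1 IH1 u2 IH2|u1 IH1 u2 IH2] [b|v1 v2|v1 v2] //= [].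
- by move=> ->.
- move=> e1 e2; rewrite (split3 _ (dl (deval t2 v1) (deval t2 v2))) subrr addr0.
  rewrite (split3 _ (dl (deval t2 v1) (deval t1 u2))) -lBl -lBr.
  by apply: inKD; [apply: inK_dl_l; exact: IH1 | apply: inK_dl_r; exact: IH2].
- move=> e1 e2; rewrite (split3 _ (dl (deval t2 v1) (deval t2 v2))).
  apply: inKD; last exact: inK_gen.
  rewrite (split3 _ (dl (deval t2 v1) (deval t1 u2))) -lBl -lBr.
  by apply: inKD; [apply: inK_dl_l; exact: IH1 | apply: inK_dl_r; exact: IH2].
- move=> e1 e2; rewrite (split3 _ (dr (deval t2 v1) (deval t2 v2))).
  apply: inKD; last by rewrite -opprB; apply: inKN; exact: inK_gen.
  rewrite (split3 _ (dr (deval t2 v1) (deval t1 u2))) -rBl -rBr.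
  by apply: inKD; [apply: inK_dr_l; exact: IH1 | apply: inK_dr_r; exact: IH2].
- move=> e1 e2; rewrite (split3 _ (dr (deval t2 v1) (deval t2 v2))) subrr addr0.
  rewrite (split3 _ (dr (deval t2 v1) (deval t1 u2))) -rBl -rBr.
  by apply: inKD; [apply: inK_dr_l; exact: IH1 | apply: inK_dr_r; exact: IH2].
Qed.

Lemma Kbar1 (t : nat -> D) u v : dbar u = dbar v -> forall z, dl (deval t u) z = dl (deval t v) z.
Proof. by move=> e; apply: inK_eq; apply: Kbar => // l; rewrite subrr; exact: inK0. Qed.

Lemma Kbar1r (t : nat -> D) u v : dbar u = dbar v -> forall z, dr z (deval t u) = dr z (deval t v).
Proof. by move=> e z; rewrite -!comm; exact: Kbar1. Qed.

Definition rep (F : Eel D) : D := projT1 (cid (eP F)).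
Lemma repP (F : Eel D) : ef F = dl (rep F).
Proof. exact: (projT2 (cid (eP F))). Qed.

Definition emul (F G : Eel D) : Eel D := mk (dl (rep F) (rep G)).

Lemma emul_rep F G u v : ef F = dl u -> ef G = dl v -> ef (emul F G) = dl (dl u v).
Proof.
move=> hu hv; rewrite /emul ef_mk; apply: funext; apply: inK_eq.
have kF : inK (rep F - u) by apply: eq_inK => z; rewrite -repP hu.
have kG : inK (rep G - v) by apply: eq_inK => z; rewrite -repP hv.
rewrite (split3 _ (dl u (rep G))) -lBl -lBr.
by apply: inKD; [apply: inK_dl_l | apply: inK_dl_r].
Qed.

Lemma ef_lin (F : Eel D) (a : k) y z : ef F (a *: y + z) = a *: ef F y + ef F z.
Proof. by rewrite repP (@dlDr _ D). Qed.

Lemma emulDl (a : k) F G H : emul (a *: F + G) H = a *: emul F H + emul G H.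
Proof.
apply: Eel_eq; rewrite (@emul_rep _ _ (a *: rep F + rep G) (rep H)); last 2 first.
- by apply: funext => y; rewrite efD efZ !repP (@dlDl _ D).
- exact: repP.
apply: funext => y; rewrite efD efZ (emul_rep (repP F) (repP H)) (emul_rep (repP G) (repP H)).
by rewrite !(@dlDl _ D).
Qed.
Lemma emulDr (a : k) F G H : emul H (a *: F + G) = a *: emul H F + emul H G.
Proof.
apply: Eel_eq; rewrite (@emul_rep _ _ (rep H) (a *: rep F + rep G)); last 2 first.
- exact: repP.
- by apply: funext => y; rewrite efD efZ !repP (@dlDl _ D).
apply: funext => y; rewrite efD efZ (emul_rep (repP H) (repP F)) (emul_rep (repP H) (repP G)).
by rewrite (@dlDr _ D) (@dlDl _ D).
Qed.

Definition hh (p q : Eel D * D) : Eel D * D := (emul p.1 q.1, ef p.1 q.2 + ef q.1 p.2).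

Lemma hhDl a (p q r : Eel D * D) : hh (a *: p + q) r = a *: hh p r + hh q r.
Proof.
apply: pair_ext; rewrite /hh !prodE /=; first exact: emulDl.
by rewrite ?efD ?efZ ef_lin scalerDr addrACA.
Qed.
Lemma hhDr a (p q r : Eel D * D) : hh r (a *: p + q) = a *: hh r p + hh r q.
Proof.
apply: pair_ext; rewrite /hh !prodE /=; first exact: emulDr.
by rewrite ?efD ?efZ ef_lin scalerDr addrACA.
Qed.

Definition Hh : nalg k := @NAlg k (Eel D * D)%type hh hhDl hhDr.

Lemma Hh_comm (p q : Hh) : nmul p q = nmul q p.
Proof.
apply: pair_ext; rewrite /= /hh /=; last exact: addrC.
apply: Eel_eq; rewrite (emul_rep (repP _) (repP _)) (emul_rep (repP _) (repP _)).
by apply: funext => y; rewrite [dl (rep q.1) _]comm ax1.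
Qed.

Lemma E1 (s : nat -> Hh) (a : nat -> D) (Ha : forall l, ef (s l).1 = dl (a l)) w :
  ef (neval s w).1 = dl (deval a (psi_mono 0 w)).
Proof.
elim: w => [l|u IHu v IHv]; first exact: Ha.
have -> : (neval s (NMul u v)).1 = emul (neval s u).1 (neval s v).1 by [].
rewrite (emul_rep IHu IHv) /=; case: ifP => _ //=.
by apply: funext => y; rewrite ax1.
Qed.

Definition tj (s : nat -> Hh) (a : nat -> D) (j : nat) : nat -> D :=
  fun l => if l == j then (s l).2 else a l.

Lemma E2 (s : nat -> Hh) (a : nat -> D) (Ha : forall l, ef (s l).1 = dl (a l)) w :
  uniq (nleaves w) ->
  (neval s w).2 = \sum_(j <- nleaves w) deval (tj s a j) (psi_mono j w).
Proof.
elim: w => [l|u IHu v IHv]; first by rewrite /= big_seq1 /tj eqxx.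
rewrite [nleaves _]/= cat_uniq => /and3P [uu huv uv].
have -> : (neval s (NMul u v)).2 = ef (neval s u).1 (neval s v).2 + ef (neval s v).1 (neval s u).2 by [].
rewrite [nleaves _]/= big_cat (E1 Ha u) (E1 Ha v) IHu // IHv // addrC.
have lsum := b_sumr (@dlDr _ D).
rewrite !lsum; congr (_ + _); apply: eq_big_seq => j jw.
  have jv : j \notin nleaves v by apply: contra huv => jv; apply/hasP; exists j.
  rewrite /= jw /= -comm.
  rewrite (@dagree _ _ (tj s a j) a (psi_mono j v)); last first.
    by move=> l; rewrite dleaves_psi /tj => lv; case: eqP => // e; rewrite -e lv in jv.
  by apply: Kbar1; rewrite !dbar_psi.
have ju : j \notin nleaves u by apply: contra huv => ju; apply/hasP; exists j.
rewrite /= (negbTE ju) /=.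
rewrite (@dagree _ _ (tj s a j) a (psi_mono j u)); last first.
  by move=> l; rewrite dleaves_psi /tj => lu; case: eqP => // e; rewrite -e lu in ju.
by apply: Kbar1; rewrite !dbar_psi.
Qed.


Lemma sum6 (V : zmodType) (G1 G2 G3 G4 G5 G6 : nat -> V) (l1 l2 l3 l4 l5 l6 : seq nat) :
  perm_eq l1 [:: 1; 2; 3; 4]%N -> perm_eq l2 [:: 1; 2; 3; 4]%N -> perm_eq l3 [:: 1; 2; 3; 4]%N ->
  perm_eq l4 [:: 1; 2; 3; 4]%N -> perm_eq l5 [:: 1; 2; 3; 4]%N -> perm_eq l6 [:: 1; 2; 3; 4]%N ->
  (forall j, (1 <= j <= 4)%N -> G1 j + G2 j + G3 j - G4 j - G5 j - G6 j = 0) ->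
  \sum_(j <- l1) G1 j + \sum_(j <- l2) G2 j + \sum_(j <- l3) G3 j
  - \sum_(j <- l4) G4 j - \sum_(j <- l5) G5 j - \sum_(j <- l6) G6 j = 0.
Proof.
move=> p1 p2 p3 p4 p5 p6 h.
rewrite (perm_big _ p1) (perm_big _ p2) (perm_big _ p3) (perm_big _ p4) (perm_big _ p5) (perm_big _ p6).
rewrite -!sumrN -!big_split /= big_seq big1 // => j.
by rewrite !inE => /or4P [] /eqP ->; apply: h.
Qed.

Lemma Hh_jordan : is_jordan Hh.
Proof.
split; first exact: Hh_comm.
move=> s; set a := fun l => rep (s l).1.
have Ha : forall l, ef (s l).1 = dl (a l) by move=> l; exact: repP.
apply: pair_ext.
  rewrite fst0; apply: Eel_eq; apply: funext => y; rewrite ef0.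
  have HL : forall (c : k) (p q : Hh), ef (c *: p + q).1 y = c *: ef p.1 y + ef q.1 y by [].
  rewrite /peval (fglift_lin _ HL) JpolyE !(E1 Ha).
  have K01 : forall w, dl (deval a (psi_mono 0 w)) y = dl (deval a (psi_mono 1 w)) y.
    by move=> w; apply: Kbar1; rewrite !dbar_psi.
  rewrite !K01.
  have := psiJ (isT : (1 <= 1 <= 4)%N) a; rewrite /dpeval /Psi fglift_comp JpolyE => h.
  by rewrite -!lDl -!lBl h l0l.
rewrite snd0.
have HL2 : forall (c : k) (p q : Hh), (c *: p + q).2 = c *: p.2 + q.2 by [].
rewrite /peval (fglift_lin _ HL2) JpolyE !(E2 Ha) //.
apply: sum6 => // j Hj.
by have := psiJ Hj (tj s a j); rewrite /dpeval /Psi fglift_comp JpolyE.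
Qed.

Lemma central_psi (s : nat -> D) m : uniq (dleaves m) ->
  deval s (psi_mono (central m) (dbar m)) = deval s m.
Proof.
elim: m => [a|u IHu v IHv|u IHu v IHv] //=; rewrite cat_uniq => /and3P [uu huv uv].
  have cu : central v \notin nleaves (dbar u).
    rewrite nleaves_dbar; apply: contra huv => h; apply/hasP; exists (central v) => //.
    exact: central_in.
  rewrite (negbTE cu) /= IHv //.
  by apply: Kbar1; rewrite dbar_psi.
rewrite nleaves_dbar central_in /= IHu //.
by apply: Kbar1r; rewrite dbar_psi.
Qed.

Lemma deval0 (t : nat -> D) m l : l \in dleaves m -> t l = 0 -> deval t m = 0.
Proof.
elim: m => [a|u IHu v IHv|u IHu v IHv] /=.
- by rewrite inE => /eqP ->.
- rewrite mem_cat => /orP [lu|lv] tl0; first by rewrite IHu // l0l.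
  by rewrite IHv // l0r.
- rewrite mem_cat => /orP [lu|lv] tl0; first by rewrite IHu // r0l.
  by rewrite IHv // r0r.
Qed.

Definition hsj (s : nat -> D) (j : nat) : nat -> Hh :=
  fun l => (mk (s l), if l == j then s l else 0).

Lemma hsj_mono s j m : uniq (dleaves m) -> central m = j ->
  (neval (hsj s j) (dbar m)).2 = deval s m.
Proof.
move=> um cj.
rewrite (@E2 (hsj s j) s) ?nleaves_dbar //.
rewrite (eq_big_seq (fun l => if l == j then deval s m else 0)); last first.
  move=> l lm; case: eqP => [e|ne].
    rewrite (@dagree _ _ _ s); last by move=> l' _; rewrite /tj /hsj /=; case: eqP => // ->; rewrite -e eqxx.
    by rewrite e -cj central_psi.
  apply: (@deval0 _ _ l); first by rewrite dleaves_psi nleaves_dbar.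
  by rewrite /tj /hsj /= eqxx; move/eqP/negbTE: ne => ->.
by apply: big_if1 => //; rewrite -cj central_in.
Qed.

Lemma hat_sum (f : DiAlg k) n : dmultilin_in n f -> forall s : nat -> D,
  \sum_(j <- iota 1 n) (peval (hsj s j) (bar (central_part j f))).2 = dpeval s f.
Proof.
move=> Hml s.
have snd_sum : forall (r : seq dmono) (P : pred dmono) (F : dmono -> Hh),
    (\sum_(i <- r | P i) F i).2 = \sum_(i <- r | P i) (F i).2.
  by move=> r P F; exact: (big_morph (fun p : Hh => p.2) (fun x y => erefl) erefl).
have Hj : forall j, (peval (hsj s j) (bar (central_part j f))).2 =
    \sum_(m <- dom f | central m == j) coeff m f *: deval s m.
  move=> j; rewrite bar_eval snd_sum big_seq_cond [RHS]big_seq_cond.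
  apply: eq_bigr => m /andP [mf /eqP cm]; rewrite snd_scale hsj_mono //.
  by rewrite (perm_uniq (Hml m mf)) iota_uniq.
rewrite (eq_bigr _ (fun j _ => Hj j)) (exchange_big_dep predT) //=.
rewrite /dpeval fgliftE; apply: eq_big_seq => m mf.
rewrite big_mkcond (eq_bigr (fun j => if j == central m then coeff m f *: deval s m else 0)).
  apply: big_if1; first exact: iota_uniq.
  by rewrite -(perm_mem (Hml m mf)) central_in.
by move=> j _; rewrite eq_sym.
Qed.

End Hat2.

Section Part2.
Variable k : fieldType.

Lemma part2 n (f : DiAlg k) : dmultilin_in n f -> DiSId f ->
  exists2 j : nat, (1 <= j <= n)%N & SId (bar (central_part j f)).
Proof.
move=> Hml [Hdm [Hsp Hnj]].
apply: contrapT => Hno; apply: Hnj => D HD s.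
rewrite -(hat_sum HD Hml s) big_seq big1 // => j; rewrite mem_iota add1n ltnS => Hj.
have : forall A : nalg k, is_jordan A -> nvanishes A (bar (central_part j f)).
  apply: contrapT => nv; apply: Hno; exists j => //; split; first exact: bar_multilin.
  by split; [exact: bar_special | exact: nv].
by move/(_ _ (Hh_jordan HD) (hsj HD s j)) => ->.
Qed.
End Part2.

Theorem mainTheorem6 (k : fieldType) (char0 : [pchar k] =i pred0) :
  (forall (n : nat) (g : Alg k), multilin_in n g -> SId g ->
     forall i : nat, (1 <= i <= n)%N -> DiSId (Psi i g)) /\
  (forall (n : nat) (f : DiAlg k), dmultilin_in n f -> DiSId f ->
     exists2 j : nat, (1 <= j <= n)%N & SId (bar (central_part j f))).
Proof.
split; [exact: part1 | exact: part2].
Qed.
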